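(* Let $\mathcal{A}$ be a finite-dimensional prebialgebra over $\mathbb{C}$ (unit $1_{\mathcal{A}}$, comultiplication $\Delta$, counit $\epsilon$), $\rho:\mathcal{A}\to M_{d_\rho}(\mathbb{C})$ a representation and $(v_{ij})_{1\le i,j\le d_v}$ a corepresentation. With a basis $B(\mathcal{A})$ and dual basis $\delta_x$, define $U^{ab}_{ij}=\rho_{ab}(v_{ij})$, $R^{yx}_{ab}=(\delta_y\otimes\rho_{ab})(\Delta(x))$, $V^{yx}_{ij}=\delta_y(xv_{ij})$, $u_x=\delta_x(1_{\mathcal{A}})$, $e_x=\epsilon(x)$. For $n\ge1$ define $$M_n(a_1,i_1,\dots,a_n,i_n;b_1,j_1,\dots,b_n,j_n)=\sum_{x_0,\dots,x_{2n}\in B(\mathcal{A})}e_{x_0}\prod_{m=1}^{n}\Big(R^{x_{2m-2}x_{2m-1}}_{a_mb_m}V^{x_{2m-1}x_{2m}}_{i_mj_m}\Big)u_{x_{2n}},$$ and define $T_n$ recursively by $T_1(a_1,i_1;b_1,j_1)=U^{a_1b_1}_{i_1j_1}$ and, for $n\ge2$, $$T_n(a_1,i_1,\dots,a_n,i_n;b_1,j_1,\dots,b_n,j_n)=\sum_{c_1,\dots,c_{n-1}}\sum_{k_2,\dots,k_n}T_{n-1}(a_1,i_2,a_2,i_3,\dots,a_{n-1},i_n;c_1,k_2,\dots,c_{n-1},k_n)\prod_{m=1}^nU^{c_mb_m}_{k_mj_m}$$ with $k_1:=i_1$, $c_n:=a_n$. Then $M_n=T_n$ for all $n\ge1$.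
   Context: A prebialgebra is a unital associative algebra and a coassociative counital coalgebra ($(\Delta\otimes\mathrm{id})\Delta=(\mathrm{id}\otimes\Delta)\Delta$, $(\epsilon\otimes\mathrm{id})\Delta=(\mathrm{id}\otimes\epsilon)\Delta=\mathrm{id}$) such that $\Delta(xy)=\Delta(x)\Delta(y)$; no compatibility of $\Delta$ with the unit or of $\epsilon$ with multiplication is assumed. A representation is a unital algebra homomorphism $\rho:\mathcal{A}\to M_{d_\rho}(\mathbb{C})$; a corepresentation is a matrix $(v_{ij})$ of elements of $\mathcal{A}$ with $\Delta(v_{ij})=\sum_kv_{ik}\otimes v_{kj}$ and $\epsilon(v_{ij})=\delta_{ij}$. $T_n$ is the contraction of a triangular brickwork network of $n(n+1)/2$ copies of $U$. *)

(* Defs.v *)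
From mathcomp Require Import all_boot all_algebra.
From mathcomp Require Import complex.
From mathcomp Require Import Rstruct.

Set Implicit Arguments.
Unset Strict Implicit.
Unset Printing Implicit Defensive.
Import GRing.Theory.
Local Open Scope ring_scope.

Definition CC : fieldType := (Rdefinitions.R)[i].

(** A finite-dimensional algebra/coalgebra over CC of dimension N, presented
    by structure constants in a fixed basis B(A) = {e_0, ..., e_(N-1)}
    (indexed by 'I_N).  An element of A is its coordinate vector 'I_N -> CC,
    i.e. the function y |-> delta_y(element).
      e_x e_y         = \sum_z  mulc x y z   e_z
      1_A             = \sum_x  unitc x      e_x
      Delta(e_x)      = \sum_{y,z} comulc x y z  e_y (x) e_z
      epsilon(e_x)    = counitc x                                           *)
Record alg_data (N : nat) := AlgData {
  mulc    : 'I_N -> 'I_N -> 'I_N -> CC;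
  unitc   : 'I_N -> CC;
  comulc  : 'I_N -> 'I_N -> 'I_N -> CC;
  counitc : 'I_N -> CC
}.

Section Prebialgebra.
Variables (N : nat) (P : alg_data N).

Definition elt := 'I_N -> CC.

Definition mulA (p q : elt) : elt :=
  fun z => \sum_(x < N) \sum_(y < N) p x * q y * mulc P x y z.

Definition basis (x : 'I_N) : elt := fun y => (x == y)%:R.

(** No compatibility of Delta with the unit nor of
    epsilon with the product is assumed. *)
Definition is_prebialgebra : Prop :=
  [/\
      (forall p q r : elt, mulA (mulA p q) r = mulA p (mulA q r)),
      (forall p : elt, mulA (unitc P) p = p /\ mulA p (unitc P) = p),
      (forall x y1 y2 y3 : 'I_N,
         \sum_(w < N) comulc P x w y3 * comulc P w y1 y2
         = \sum_(w < N) comulc P x y1 w * comulc P w y2 y3),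
      (forall x y : 'I_N,
         \sum_(w < N) comulc P x w y * counitc P w = (x == y)%:R /\
         \sum_(w < N) comulc P x y w * counitc P w = (x == y)%:R) &
      (forall x y p q : 'I_N,
         \sum_(z < N) mulc P x y z * comulc P z p q
         = \sum_(p1 < N) \sum_(p2 < N) \sum_(q1 < N) \sum_(q2 < N)
             comulc P x p1 q1 * comulc P y p2 q2
             * mulc P p1 p2 p * mulc P q1 q2 q)].

Definition rhoA d (rho : 'I_N -> 'M[CC]_d) (p : elt) : 'M[CC]_d :=
  \sum_(x < N) p x *: rho x.

Definition is_rep d (rho : 'I_N -> 'M[CC]_d) : Prop :=
  rhoA rho (unitc P) = 1%:M /\
  forall p q : elt, rhoA rho (mulA p q) = rhoA rho p *m rhoA rho q.

Definition is_corep dv (v : 'I_dv -> 'I_dv -> elt) : Prop :=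
  (forall (i j : 'I_dv) (y z : 'I_N),
     \sum_(x < N) v i j x * comulc P x y z
     = \sum_(k < dv) v i k y * v k j z) /\
  (forall i j : 'I_dv, \sum_(x < N) v i j x * counitc P x = (i == j)%:R).

Section Tensors.
Variables (d dv : nat) (rho : 'I_N -> 'M[CC]_d) (v : 'I_dv -> 'I_dv -> elt).

Definition Ut (a b : 'I_d) (i j : 'I_dv) : CC := rhoA rho (v i j) a b.
Definition Rt (y x : 'I_N) (a b : 'I_d) : CC :=
  \sum_(z < N) comulc P x y z * rho z a b.
Definition Vt (y x : 'I_N) (i j : 'I_dv) : CC := mulA (basis x) (v i j) y.
Definition ut (x : 'I_N) : CC := unitc P x.
Definition et (x : 'I_N) : CC := counitc P x.

(** M_n, with 0-based indices: argument m : 'I_n stands for the paper's m+1,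
    and x : 'I_(2n+1) -> B(A) is the tuple (x_0, ..., x_(2n)). *)
Definition Mn (n : nat) (a : 'I_n -> 'I_d) (i : 'I_n -> 'I_dv)
    (b : 'I_n -> 'I_d) (j : 'I_n -> 'I_dv) : CC :=
  \sum_(x : {ffun 'I_(n.*2).+1 -> 'I_N})
    et (x ord0) *
    (\prod_(m < n)
        (Rt (x (inord (m.*2))) (x (inord (m.*2).+1)) (a m) (b m) *
         Vt (x (inord (m.*2).+1)) (x (inord (m.*2).+2)) (i m) (j m))) *
    ut (x (inord (n.*2))).

(** T_(k+1) by recursion on k (index types 'I_k.+1, 0-based). *)
Fixpoint Tn (k : nat) : ('I_k.+1 -> 'I_d) -> ('I_k.+1 -> 'I_dv) ->
                        ('I_k.+1 -> 'I_d) -> ('I_k.+1 -> 'I_dv) -> CC :=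
  match k with
  | 0 => fun a i b j => Ut (a ord0) (b ord0) (i ord0) (j ord0)
  | k'.+1 => fun a i b j =>
      \sum_(c : {ffun 'I_k'.+1 -> 'I_d})
      \sum_(kk : {ffun 'I_k'.+1 -> 'I_dv})
        Tn (fun m => a (widen_ord (leqnSn _) m))   (* a_1 .. a_(n-1) *)
           (fun m => i (lift ord0 m))              (* i_2 .. i_n     *)
           c                                       (* c_1 .. c_(n-1) *)
           kk                                      (* k_2 .. k_n     *)
        * \prod_(m < k'.+2)
            Ut (match unlift ord_max m with Some m' => c m' | None => a ord_max end)
               (b m)
               (match unlift ord0 m with Some m' => kk m' | None => i ord0 end)
               (j m)
  end.

End Tensors.
End Prebialgebra.

(* Main.v *)
Require Import Defs.
From mathcomp Require Import all_boot all_algebra.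
From mathcomp Require Import complex.
From mathcomp Require Import Rstruct.
From mathcomp Require Import ring zify.
From Stdlib Require Import FunctionalExtensionality Setoid Morphisms.
Set Implicit Arguments.
Unset Strict Implicit.
Unset Printing Implicit Defensive.
Import GRing.Theory.
Local Open Scope ring_scope.

Definition ncons (T : Type) (x : T) (g : nat -> T) : nat -> T :=
  fun l => if l is l'.+1 then g l' else x.

Fixpoint msum (T : finType) (t0 : T) (n : nat) (F : (nat -> T) -> CC) : CC :=
  match n with
  | 0 => F (fun _ => t0)
  | n'.+1 => \sum_(x : T) msum t0 n' (fun g => F (ncons x g))
  end.

Lemma msumS (T : finType) (t0 : T) n F :
  msum t0 n.+1 F = \sum_(x : T) msum t0 n (fun g => F (ncons x g)).
Proof. by []. Qed.

Lemma msum_ext (T : finType) (t0 : T) n (F G : (nat -> T) -> CC) :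
  (forall g, F g = G g) -> msum t0 n F = msum t0 n G.
Proof.
elim: n F G => [|n IH] F G H /=; first exact: H.
by apply: eq_bigr => x _; apply: IH => g.
Qed.

Lemma msumZ (T : finType) (t0 : T) n c (F : (nat -> T) -> CC) :
  msum t0 n (fun g => c * F g) = c * msum t0 n F.
Proof.
elim: n F => [|n IH] F //=.
rewrite mulr_sumr; apply: eq_bigr => x _; exact: IH.
Qed.

Lemma msum_sum (T X : finType) (t0 : T) n (F : X -> (nat -> T) -> CC) :
  msum t0 n (fun g => \sum_(x : X) F x g) = \sum_(x : X) msum t0 n (F x).
Proof.
elim: n F => [|n IH] F //=.
under eq_bigr do rewrite IH.
by rewrite exchange_big.
Qed.

Lemma lin_msum (T X : finType) (t0 : T) n (K : X -> CC) (F : (nat -> T) -> X -> CC) :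
  \sum_(x : X) K x * msum t0 n (fun g => F g x) = msum t0 n (fun g => \sum_(x : X) K x * F g x).
Proof.
rewrite msum_sum; apply: eq_bigr => x _; by rewrite msumZ.
Qed.

Definition fcons (T : finType) n (x : T) (g : {ffun 'I_n -> T}) : {ffun 'I_n.+1 -> T} :=
  [ffun m : 'I_n.+1 => if unlift ord0 m is Some m' then g m' else x].

Lemma sum_ffun_msum (T : finType) (t0 : T) n (G : {ffun 'I_n -> T} -> CC) :
  \sum_(f : {ffun 'I_n -> T}) G f = msum t0 n (fun C => G [ffun m : 'I_n => C m]).
Proof.
elim: n G => [|n IH] G /=.
  rewrite (big_pred1 [ffun m : 'I_0 => t0]) // => f /=.
  by apply/esym/eqP/ffunP => -[].
rewrite (reindex (fun p : T * {ffun 'I_n -> T} => fcons p.1 p.2)) /=; last first.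
  exists (fun f : {ffun 'I_n.+1 -> T} => (f ord0, [ffun m => f (lift ord0 m)])).
    move=> [x g] _ /=; congr pair; first by rewrite /fcons ffunE unlift_none.
    by apply/ffunP => m; rewrite !ffunE liftK.
  move=> f _; apply/ffunP => m; rewrite /fcons !ffunE.
  by case: unliftP => [m'|] ->; rewrite ?ffunE.
rewrite -(pair_big xpredT xpredT (fun x g => G (fcons x g))) /=.
apply: eq_bigr => x _; rewrite IH; apply: msum_ext => C; congr G.
apply/ffunP => m; rewrite /fcons !ffunE.
by case: unliftP => [m'|] ->; rewrite ?ffunE ?lift0.
Qed.

Section Alg.
Variables (N : nat) (P : alg_data N) (d dv : nat) (rho : 'I_N -> 'M[CC]_d)
  (v : 'I_dv -> 'I_dv -> elt N).
Hypotheses (HP : is_prebialgebra P) (Hrho : is_rep P rho) (Hv : is_corep P v).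

Lemma sum_delta (F : 'I_N -> CC) x : \sum_(w < N) (x == w)%:R * F w = F x.
Proof.
rewrite (bigD1 x) //= eqxx mul1r big1 ?addr0 // => w.
by rewrite eq_sym => /negbTE ->; rewrite mul0r.
Qed.

Lemma sum_delta' (F : 'I_N -> CC) x : \sum_(w < N) F w * (w == x)%:R = F x.
Proof.
rewrite -[RHS](sum_delta F); apply: eq_bigr => w _; by rewrite eq_sym mulrC.
Qed.

Definition PhiA (a b : 'I_d) (p : elt N) : elt N :=
  fun y => \sum_(x < N) Rt P rho y x a b * p x.
Definition MV (i j : 'I_dv) (p : elt N) : elt N :=
  fun y => \sum_(x < N) Vt P v y x i j * p x.
Definition eps (p : elt N) : CC := \sum_(x < N) et P x * p x.

Lemma mulA_alt (p q : elt N) z :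
  Defs.mulA P p q z = \sum_(x < N) (\sum_(y < N) q y * Defs.mulc P x y z) * p x.
Proof.
apply: eq_bigr => x _; rewrite mulr_suml; apply: eq_bigr => y _; ring.
Qed.

Lemma MV_mul i j p : MV i j p = Defs.mulA P p (v i j).
Proof.
apply: functional_extensionality => y.
rewrite /MV mulA_alt; apply: eq_bigr => x _; congr (_ * _).
rewrite /Vt /Defs.mulA /Defs.basis.
under eq_bigr do under eq_bigr do rewrite -mulrA.
under eq_bigr do rewrite -mulr_sumr.
by rewrite (sum_delta (fun x0 => \sum_(y0 < N) v i j y0 * Defs.mulc P x0 y0 y)).
Qed.

Lemma rhoA_entry (p : elt N) a b : rhoA rho p a b = \sum_(x < N) p x * rho x a b.
Proof. by rewrite /rhoA summxE; apply: eq_bigr => x _; rewrite mxE. Qed.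

Lemma eps_Phi a b p : eps (PhiA a b p) = rhoA rho p a b.
Proof.
have [_ _ _ Hc _] := HP.
rewrite rhoA_entry /eps /PhiA.
under eq_bigr do rewrite mulr_sumr.
rewrite exchange_big; apply: eq_bigr => x _ /=.
rewrite /Rt.
under eq_bigr do rewrite mulr_suml mulr_sumr.
rewrite exchange_big /=.
rewrite -[RHS](sum_delta (fun z => p x * rho z a b)).
apply: eq_bigr => z _.
rewrite -(Hc x z).1 !mulr_suml; apply: eq_bigr => w _. rewrite /et; ring.
Qed.

Lemma Phi_v a b i j y :
  PhiA a b (v i j) y = \sum_(k < dv) Ut rho v a b k j * v i k y.
Proof.
have [Hv1 _] := Hv.
rewrite /PhiA /Rt.
under eq_bigr do rewrite mulr_suml.
rewrite exchange_big /=.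
under eq_bigr => z _.
  have -> : \sum_(x < N) comulc P x y z * rho z a b * v i j x
            = (\sum_(x < N) v i j x * comulc P x y z) * rho z a b.
    by rewrite mulr_suml; apply: eq_bigr => x _; ring.
  rewrite Hv1 mulr_suml.
  over.
rewrite exchange_big /=; apply: eq_bigr => k _.
rewrite /Ut rhoA_entry mulr_suml; apply: eq_bigr => z _; ring.
Qed.
End Alg.

#[export] Instance bigop_proper (R I : Type) (idx : R) (r : seq I) :
  Proper (pointwise_relation I eq ==> eq) (@bigop.body R I idx r).
Proof. move=> f g H; f_equal; exact: functional_extensionality. Qed.


Lemma sum_in2 (I1 I2 I3 : finType) (F : I1 -> I2 -> I3 -> CC) :
  \sum_(a : I1) \sum_(b : I2) \sum_(c : I3) F a b c = \sum_(b : I2) \sum_(c : I3) \sum_(a : I1) F a b c.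
Proof. rewrite exchange_big; apply: eq_bigr => b _; exact: exchange_big. Qed.
Lemma sum_in3 (I1 I2 I3 I4 : finType) (F : I1 -> I2 -> I3 -> I4 -> CC) :
  \sum_(a : I1) \sum_(b : I2) \sum_(c : I3) \sum_(e : I4) F a b c e =
  \sum_(b : I2) \sum_(c : I3) \sum_(e : I4) \sum_(a : I1) F a b c e.
Proof. rewrite exchange_big; apply: eq_bigr => b _; exact: sum_in2. Qed.
Lemma sum_in4 (I1 I2 I3 I4 I5 : finType) (F : I1 -> I2 -> I3 -> I4 -> I5 -> CC) :
  \sum_(a : I1) \sum_(b : I2) \sum_(c : I3) \sum_(e : I4) \sum_(f : I5) F a b c e f =
  \sum_(b : I2) \sum_(c : I3) \sum_(e : I4) \sum_(f : I5) \sum_(a : I1) F a b c e f.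
Proof. rewrite exchange_big; apply: eq_bigr => b _; exact: sum_in3. Qed.

Section A.
Variables (N : nat) (P : alg_data N) (d dv : nat) (rho : 'I_N -> 'M[CC]_d)
  (v : 'I_dv -> 'I_dv -> elt N).
Hypotheses (HP : is_prebialgebra P) (Hrho : is_rep P rho) (Hv : is_corep P v).
Ltac expand := repeat (setoid_rewrite mulr_suml || setoid_rewrite mulr_sumr).
Lemma rho_mul x1 x2 a b :
  \sum_(z < N) Defs.mulc P x1 x2 z * rho z a b = \sum_(c < d) rho x1 a c * rho x2 c b.
Proof.
have [_ Hr] := Hrho.
have Hb x : rhoA rho (Defs.basis x) = rho x.
  apply/matrixP => a' b'; rewrite rhoA_entry /Defs.basis.
  exact: (sum_delta (fun w => rho w a' b')).
have := congr1 (fun M : 'M_d => M a b) (Hr (Defs.basis x1) (Defs.basis x2)).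
rewrite /= !Hb mxE rhoA_entry => <-.
apply: eq_bigr => z _; congr (_ * _).
rewrite /Defs.mulA /Defs.basis.
under eq_bigr do under eq_bigr do rewrite -mulrA.
under eq_bigr do rewrite -mulr_sumr.
rewrite (sum_delta (fun x0 => \sum_(y0 < N) (x2 == y0)%:R * Defs.mulc P x0 y0 z)).
by rewrite (sum_delta (fun y0 => Defs.mulc P x1 y0 z)).
Qed.
Lemma PhiB a b x1 x2 y :
  \sum_(x < N) Rt P rho y x a b * Defs.mulc P x1 x2 x =
  \sum_(c < d) \sum_(p1 < N) \sum_(p2 < N)
     Rt P rho p1 x1 a c * Rt P rho p2 x2 c b * Defs.mulc P p1 p2 y.
Proof.
have [_ _ _ _ HD] := HP.
have [_ Hr] := Hrho.
rewrite /Rt.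
expand.
rewrite exchange_big /=.
under eq_bigr => z _.
  have -> : \sum_(x < N) comulc P x y z * rho z a b * Defs.mulc P x1 x2 x =
     (\sum_(x < N) Defs.mulc P x1 x2 x * comulc P x y z) * rho z a b.
    by rewrite mulr_suml; apply: eq_bigr => x _; ring.
  rewrite HD.
  over.
expand.
rewrite sum_in4 [RHS]sum_in4.
apply: eq_bigr => p1 _; apply: eq_bigr => p2 _; apply: eq_bigr => q1 _; apply: eq_bigr => q2 _.
under eq_bigr do rewrite -mulrA.
rewrite -mulr_sumr rho_mul mulr_sumr.
apply: eq_bigr => c _; ring.
Qed.
Lemma PhiM a b p q y :
  PhiA P rho a b (Defs.mulA P p q) y =
  \sum_(c < d) Defs.mulA P (PhiA P rho a c p) (PhiA P rho c b q) y.
Proof.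
have HB := PhiB a b.
rewrite /PhiA /Defs.mulA.
move: HB; generalize (Rt P rho) => R HB.
expand.
rewrite [LHS]sum_in2.
under eq_bigr => x1 _.
  under eq_bigr => x2 _.
    have -> : \sum_(x < N) R y x a b * (p x1 * q x2 * Defs.mulc P x1 x2 x) =
      p x1 * q x2 * \sum_(x < N) R y x a b * Defs.mulc P x1 x2 x.
      by rewrite mulr_sumr; apply: eq_bigr => x _; ring.
    rewrite HB.
    over.
  over.
expand.
rewrite sum_in4 sum_in4.
apply: eq_bigr => c _; apply: eq_bigr => p1 _; apply: eq_bigr => p2 _.
apply: eq_bigr => x1 _; apply: eq_bigr => x2 _; ring.
Qed.

Lemma push a b i j p y :
  PhiA P rho a b (Defs.mulA P p (v i j)) y =
  \sum_(c < d) \sum_(k < dv) Ut rho v c b k j * Defs.mulA P (PhiA P rho a c p) (v i k) y.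
Proof.
rewrite PhiM; apply: eq_bigr => c _.
have -> : PhiA P rho c b (v i j) = fun y => \sum_(k < dv) Ut rho v c b k j * v i k y.
  by apply: functional_extensionality => y'; rewrite Phi_v.
move: (PhiA P rho a c p) => p'.
rewrite /Defs.mulA.
expand.
rewrite [RHS]sum_in2.
apply: eq_bigr => x _; apply: eq_bigr => y' _; apply: eq_bigr => k _; ring.
Qed.
End A.

Section B.
Variables (N : nat) (P : alg_data N) (d dv : nat) (rho : 'I_N -> 'M[CC]_d)
  (v : 'I_dv -> 'I_dv -> elt N).
Hypotheses (HP : is_prebialgebra P) (Hrho : is_rep P rho) (Hv : is_corep P v).

Fixpoint Wc (L : nat) (A B : nat -> 'I_d) (I J : nat -> 'I_dv) : elt N :=
  if L is L'.+1 then
    PhiA P rho (A 0) (B 0) (MV P v (I 0) (J 0)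
      (Wc L' (fun l => A l.+1) (fun l => B l.+1) (fun l => I l.+1) (fun l => J l.+1)))
  else unitc P.

Lemma WcS L A B I J : Wc L.+1 A B I J =
    PhiA P rho (A 0) (B 0) (MV P v (I 0) (J 0)
      (Wc L (fun l => A l.+1) (fun l => B l.+1) (fun l => I l.+1) (fun l => J l.+1))).
Proof. by []. Qed.

Lemma unitA p : Defs.mulA P (unitc P) p = p.
Proof. by have [_ Hu _ _ _] := HP; exact: (Hu p).1. Qed.

Lemma lin2 (T1 T2 : finType) (t1 : T1) (t2 : T2) n1 n2 (K : 'I_N -> CC)
  (F : (nat -> T1) -> (nat -> T2) -> CC) (G : (nat -> T1) -> (nat -> T2) -> elt N) :
  \sum_(x < N) K x * msum t1 n1 (fun C => msum t2 n2 (fun Kk => F C Kk * G C Kk x)) =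
  msum t1 n1 (fun C => msum t2 n2 (fun Kk => F C Kk * \sum_(x < N) K x * G C Kk x)).
Proof.
rewrite lin_msum; apply: msum_ext => C; rewrite lin_msum; apply: msum_ext => Kk.
rewrite mulr_sumr; apply: eq_bigr => x _; ring.
Qed.

Lemma Phi_msum2 (T1 T2 : finType) (t1 : T1) (t2 : T2) n1 n2 a b
  (F : (nat -> T1) -> (nat -> T2) -> CC) (G : (nat -> T1) -> (nat -> T2) -> elt N) y :
  PhiA P rho a b (fun y => msum t1 n1 (fun C => msum t2 n2 (fun Kk => F C Kk * G C Kk y))) y =
  msum t1 n1 (fun C => msum t2 n2 (fun Kk => F C Kk * PhiA P rho a b (G C Kk) y)).
Proof. exact: lin2. Qed.

Lemma Phi_msum2F (T1 T2 : finType) (t1 : T1) (t2 : T2) n1 n2 a b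
  (F : (nat -> T1) -> (nat -> T2) -> CC) (G : (nat -> T1) -> (nat -> T2) -> elt N) :
  PhiA P rho a b (fun y => msum t1 n1 (fun C => msum t2 n2 (fun Kk => F C Kk * G C Kk y))) =
  fun y => msum t1 n1 (fun C => msum t2 n2 (fun Kk => F C Kk * PhiA P rho a b (G C Kk) y)).
Proof. apply: functional_extensionality => y; exact: lin2. Qed.

Lemma mulA_msum2 (T1 T2 : finType) (t1 : T1) (t2 : T2) n1 n2 q
  (F : (nat -> T1) -> (nat -> T2) -> CC) (G : (nat -> T1) -> (nat -> T2) -> elt N) y :
  Defs.mulA P (fun y => msum t1 n1 (fun C => msum t2 n2 (fun Kk => F C Kk * G C Kk y))) q y =
  msum t1 n1 (fun C => msum t2 n2 (fun Kk => F C Kk * Defs.mulA P (G C Kk) q y)).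
Proof.
rewrite mulA_alt lin2; apply: msum_ext => C; apply: msum_ext => Kk.
by rewrite mulA_alt.
Qed.

Lemma claim (ta : 'I_d) (ti : 'I_dv) L : forall A B I J y,
  Wc L.+1 A B I J y =
  msum ta L (fun C => msum ti L.+1 (fun K =>
    (\prod_(0 <= l < L.+1) Ut rho v (if (l < L)%N then C l else A L) (B l) (K l) (J l)) *
    Defs.mulA P (Wc L A C (fun l => I l.+1) (fun l => K l.+1)) (v (I 0) (K 0)) y)).
Proof.
elim: L => [|L IH] A B I J y.
  rewrite WcS /= MV_mul unitA Phi_v //; apply: eq_bigr => k _.
  by rewrite big_nat1 unitA.
rewrite [Wc L.+2 _ _ _ _]WcS MV_mul push //.
have E := functional_extensionality _ _ (IH (fun l => A l.+1) (fun l => B l.+1)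
            (fun l => I l.+1) (fun l => J l.+1)).
rewrite E.
rewrite [RHS]msumS; apply: eq_bigr => c _.
under eq_bigr do rewrite Phi_msum2F mulA_msum2 -msumZ.
rewrite -msum_sum; apply: msum_ext => C'.
rewrite msumS; apply: eq_bigr => k _.
rewrite -msumZ; apply: msum_ext => K'.
rewrite [Wc L.+1 _ _ _ _]WcS MV_mul.
rewrite (big_nat_recl L.+1) //=.
under [X in _ = _ * X * _]eq_bigr do rewrite ltnS.
by rewrite mulrA.
Qed.

Lemma chain (x0 : 'I_N) n : forall A B I J (f : 'I_N -> CC),
  msum x0 (n.*2).+1 (fun X => f (X 0) *
    (\prod_(0 <= m < n) (Rt P rho (X m.*2) (X m.*2.+1) (A m) (B m) *
                         Vt P v (X m.*2.+1) (X m.*2.+2) (I m) (J m))) *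
    ut P (X n.*2)) = \sum_(y < N) f y * Wc n A B I J y.
Proof.
elim: n => [|n IH] A B I J f.
  rewrite double0 /=; apply: eq_bigr => y _.
  by rewrite big_geq // mulr1.
rewrite doubleS msumS.
under eq_bigr do rewrite msumS.
rewrite WcS /PhiA.
under [RHS]eq_bigr do rewrite mulr_sumr.
apply: eq_bigr => y _; apply: eq_bigr => x _.
rewrite /MV -IH mulrA -msumZ; apply: msum_ext => g.
rewrite (big_nat_recl n) //=.
under eq_bigr do rewrite !doubleS /=.
rewrite double0.
ring.
Qed.

Lemma rhoA_msum2 (T1 T2 : finType) (t1 : T1) (t2 : T2) n1 n2 a b
  (F : (nat -> T1) -> (nat -> T2) -> CC) (G : (nat -> T1) -> (nat -> T2) -> elt N) :
  rhoA rho (fun y => msum t1 n1 (fun C => msum t2 n2 (fun Kk => F C Kk * G C Kk y))) a b =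
  msum t1 n1 (fun C => msum t2 n2 (fun Kk => F C Kk * rhoA rho (G C Kk) a b)).
Proof.
rewrite rhoA_entry; under eq_bigr do rewrite mulrC.
rewrite lin2; apply: msum_ext => C; apply: msum_ext => Kk.
rewrite rhoA_entry; congr (_ * _); apply: eq_bigr => x _; exact: mulrC.
Qed.

Lemma ffE (T : finType) n (F : 'I_n -> T) : ([ffun m => F m] : 'I_n -> T) = F.
Proof. by apply: functional_extensionality => m; rewrite ffunE. Qed.

Lemma unlift_max_eq (X : Type) n (m : 'I_n.+1) (g : 'I_n -> X) (f : nat -> X) x :
  (forall m', g m' = f m') ->
  (match unlift ord_max m with Some m' => g m' | None => x end) =
  if (m < n)%N then f m else x.
Proof.
move=> H; case: unliftP => [m'|] ->; first by rewrite H lift_max ltn_ord.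
by rewrite /= ltnn.
Qed.

Lemma unlift0_eq (X : Type) n (m : 'I_n.+1) (g : 'I_n -> X) (f : nat -> X) x :
  (forall m', g m' = f m') ->
  (match unlift ord0 m with Some m' => g m' | None => x end) =
  if (m : nat) is m'.+1 then f m' else x.
Proof.
by move=> H; case: unliftP => [m'|] ->; rewrite ?H ?lift0.
Qed.

Lemma top (ta : 'I_d) (ti : 'I_dv) L : forall A B I J,
  eps P (Wc L.+1 A B I J) =
  Tn rho v (fun m : 'I_L.+1 => A m) (fun m : 'I_L.+1 => I m)
           (fun m : 'I_L.+1 => B m) (fun m : 'I_L.+1 => J m).
Proof.
have [_ Hr] := Hrho.
elim: L => [|L IH] A B I J.
  by rewrite WcS eps_Phi // MV_mul unitA.
rewrite WcS eps_Phi // MV_mul Hr mxE.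
have E := functional_extensionality _ _ (claim ta ti L (fun l => A l.+1) (fun l => B l.+1)
            (fun l => I l.+1) (fun l => J l.+1)).
rewrite E.
under eq_bigr do rewrite rhoA_msum2 mulrC -msumZ.
cbn [Tn].
rewrite (sum_ffun_msum ta).
under msum_ext do rewrite (sum_ffun_msum ti).
rewrite msumS; apply: eq_bigr => c _.
apply: msum_ext => C'; rewrite -msumZ; apply: msum_ext => K.
rewrite !ffE.
have -> : rhoA rho (fun y => Defs.mulA P
            (Wc L (fun l : nat => A l.+1) C' (fun l : nat => I l.+2)
               (fun l : nat => K l.+1))
            (v (I 1) (K 0)) y) (A 0) c =
   Tn rho v (fun m : 'I_L.+1 => A m) (fun m : 'I_L.+1 => I m.+1)
           (fun m : 'I_L.+1 => ncons c C' m) (fun m : 'I_L.+1 => K m).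
  rewrite -(eps_Phi rho HP) -MV_mul; exact: (IH A (ncons c C') (fun l => I l.+1) K).
have -> : (fun m : 'I_L.+1 => I (lift ord0 m)) = (fun m : 'I_L.+1 => I m.+1).
  by apply: functional_extensionality => m; rewrite lift0.
rewrite mulrA [_ * Tn _ _ _ _ _ _]mulrC; congr (_ * _).
rewrite big_ord_recl.
rewrite (@unlift_max_eq _ _ _ _ (ncons c C')) // unlift_none /=.
congr (_ * _).
rewrite big_mkord; apply: eq_bigr => i _.
rewrite (@unlift_max_eq _ _ _ _ (ncons c C')) // liftK lift0 /=.
by rewrite ltnS.
Qed.

End B.

Theorem mainTheorem3
  (N : nat) (P : alg_data N) (HP : is_prebialgebra P)
  (d : nat) (rho : 'I_N -> 'M[CC]_d) (Hrho : is_rep P rho)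
  (dv : nat) (v : 'I_dv -> 'I_dv -> elt N) (Hv : is_corep P v)
  (k : nat) (a : 'I_k.+1 -> 'I_d) (i : 'I_k.+1 -> 'I_dv)
  (b : 'I_k.+1 -> 'I_d) (j : 'I_k.+1 -> 'I_dv) :
  Mn P rho v a i b j = Tn rho v a i b j.
Proof.
have HN : (0 < N)%N.
  case: N P rho v Hrho {HP Hv} => [|N'] // P' rho' v' [H1 _].
  have := congr1 (fun M : 'M_d => M (a ord0) (a ord0)) H1.
  rewrite /rhoA big_ord0 !mxE eqxx /= => /eqP; by rewrite eq_sym oner_eq0.
pose x0 := Ordinal HN.
pose A := fun l : nat => a (inord l).
pose B := fun l : nat => b (inord l).
pose I := fun l : nat => i (inord l).
pose J := fun l : nat => j (inord l).
have E : Mn P rho v a i b j = eps P (Wc P rho v k.+1 A B I J).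
  rewrite /Mn (sum_ffun_msum x0) /eps -(chain P rho v x0); apply: msum_ext => X.
  rewrite !ffunE inordK; last by rewrite -!muln2; lia.
  rewrite big_mkord; congr (_ * _ * _); apply: eq_bigr => m _.
  have Hm := ltn_ord m.
  rewrite !ffunE !inordK; try (rewrite -!muln2; lia).
  by rewrite /A /B /I /J !inord_val.
rewrite E (top HP Hrho Hv (a ord0) (i ord0)).
have F (T : Type) (f : 'I_k.+1 -> T) : (fun m : 'I_k.+1 => f (inord m)) = f.
  by apply: functional_extensionality => m; rewrite inord_val.
by rewrite /A /B /I /J !F.
Qed.
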